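(* Let $Z$ be a finite set with an abelian groupoid $\bigoplus_{\lambda\in\Lambda}G_\lambda$, let $X$ be a finite set, and let $\bar M: X\to Z$ be a $Z$-valued demolition measurement on $X$ (for this groupoid). For $\lambda\in\Lambda$ let $\bar M_\lambda := \rho_{G_\lambda}^\dagger\circ\bar M : X\to 1$. Then there exist an abelian groupoid $\bigoplus_{\gamma\in\Gamma} H_\gamma$ on $X$ and a function $f:\Gamma\to\Lambda$ such that for every $\lambda\in\Lambda$ $$\bar M_\lambda = \bigcup_{\gamma\in\Gamma,\ f(\gamma)=\lambda} D_\gamma,$$ where $D_\gamma := \rho_{H_\gamma}^\dagger\circ\mathrm{dec}_X : X\to 1$ and $\mathrm{dec}_X$ is the decoherence map of the groupoid $\bigoplus_\gamma H_\gamma$ on $X$.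
   Context: $\mathbf{fRel}$: finite sets and relations, relational composition, tensor the cartesian product with unit $1=\{\star\}$, dagger the converse relation. For a relation $g\subseteq X\times Y$, its pure CPM map is $\hat g = \{((x,x'),(y,y')) : (x,y)\in g,\ (x',y')\in g\}\subseteq (X\times X)\times(Y\times Y)$. A CPM map $X\to Y$ is a relation $R\subseteq (X\times X)\times(Y\times Y)$ of the form $\{((x,x'),(y,y')):\exists e\in E,\ (x,(e,y))\in h,\ (x',(e,y'))\in h\}$ for some finite $E$ and $h\subseteq X\times(E\times Y)$; CPM maps compose relationally, $\mathrm{id}_X=\widehat{\mathrm{id}_X}$, the dagger is the converse relation, and the tensor of $R:X\to Y$ and $S:U\to V$ is $\{(((x,u),(x',u')),((y,v),(y',v'))) : ((x,x'),(y,y'))\in R,\ ((u,u'),(v,v'))\in S\}$. The discarding map is $\cap_X = \{((x,x),\star): x\in X\}: X\to 1$; a CPM map $R:X\to Y$ is causal if $\cap_Y\circ R=\cap_X$. An abelian groupoid on a finite set $Z$ is a family of abelian groups $(G_\lambda,+,0_\lambda)_{\lambda\in\Lambda}$ with pairwise disjoint underlying sets covering $Z$. For it: comultiplication $\delta=\{(g,(g',g'')): g,g',g''\in G_\lambda\text{ for some }\lambda,\ g'+g''=g\}\subseteq Z\times(Z\times Z)$; pairing $e=\{((g,h),\star): g,h\in G_\lambda\text{ for some }\lambda,\ g+h=0_\lambda\}\subseteq (Z\times Z)\times 1$; decoherence map $\mathrm{dec}_Z=\{((x,x'),(y,y')) : \exists\lambda,\ x,x',y,y'\in G_\lambda,\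 x-y=x'-y'\}: Z\to Z$; and $\rho_{G_\lambda}=G_\lambda\times G_\lambda$, viewed as the pure CPM state $1\to Z$, with $\rho_{G_\lambda}^\dagger=\{((g,g'),\star):g,g'\in G_\lambda\}:Z\to 1$. A $Z$-valued non-demolition measurement on $X$ is a causal CPM map $M: X\to X\times Z$ of the form $M=(\mathrm{id}_X\times\mathrm{dec}_Z)\circ\hat P$ for some relation $P\subseteq X\times(X\times Z)$, satisfying (idempotence) $(M\times\mathrm{id}_Z)\circ M = (\mathrm{id}_X\times\hat\delta)\circ M$ as CPM maps $X\to X\times Z\times Z$ (on the left, the $Z$-output of the first application of $M$ is the last factor), and (self-adjointness) $(\mathrm{id}_X\times\hat e)\circ(M\times\mathrm{id}_Z) = \widehat{P^\dagger}\circ(\mathrm{id}_X\times\mathrm{dec}_Z)$ as CPM maps $X\times Z\to X$. A $Z$-valued demolition measurement on $X$ is a CPM map of the form $\bar M=(\cap_X\times\mathrm{id}_Z)\circ M: X\to Z$ for such an $M$. *)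

(* Defs.v *)
(* Finite sets = finTypes, relations = boolean-valued
   two-argument functions, unit type = the monoidal unit 1 = {star}. *)
From HB Require Import structures.
From mathcomp Require Import all_boot.
Set Implicit Arguments. Unset Strict Implicit. Unset Printing Implicit Defensive.

Definition frel (X Y : finType) := X -> Y -> bool.

(* relational composition  S \o R  (first R, then S) *)
Definition rcomp (X Y W : finType) (S : frel Y W) (R : frel X Y) : frel X W :=
  fun x w => [exists y, R x y && S y w].

Definition rconv (X Y : finType) (R : frel X Y) : frel Y X := fun y x => R x y.

Definition rid (X : finType) : frel X X := fun x y => x == y.

Definition cpm (X Y : finType) := frel (X * X)%type (Y * Y)%type.

Definition hatr (X Y : finType) (g : frel X Y) : cpm X Y :=
  fun xx yy => g xx.1 yy.1 && g xx.2 yy.2.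

Definition is_cpm (X Y : finType) (R : cpm X Y) : Prop :=
  exists (E : finType) (h : frel X (E * Y)%type),
    R = fun xx yy => [exists e, h xx.1 (e, yy.1) && h xx.2 (e, yy.2)].

Definition cid (X : finType) : cpm X X := hatr (@rid X).

Definition ctensor (X Y U V : finType) (R : cpm X Y) (S : cpm U V)
  : cpm (X * U)%type (Y * V)%type :=
  fun p q => R (p.1.1, p.2.1) (q.1.1, q.2.1) && S (p.1.2, p.2.2) (q.1.2, q.2.2).

Definition cassoc (X Y W : finType) : cpm ((X * Y) * W)%type (X * (Y * W))%type :=
  hatr (fun p q => q == (p.1.1, (p.1.2, p.2))).
Definition clunit (X : finType) : cpm (unit * X)%type X :=
  hatr (fun p x => p.2 == x).
Definition crunit (X : finType) : cpm (X * unit)%type X :=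
  hatr (fun p x => p.1 == x).

Arguments cid X : clear implicits.
Arguments cassoc X Y W : clear implicits.
Arguments clunit X : clear implicits.
Arguments crunit X : clear implicits.

Definition discard (X : finType) : cpm X unit := fun xx _ => xx.1 == xx.2.

Arguments discard X : clear implicits.

Definition causal (X Y : finType) (R : cpm X Y) : Prop :=
  rcomp (discard Y) R = discard X.

(* An abelian groupoid on Z indexed by L: the group G_l is the fibre of
   gcls over l; each fibre is an abelian group under gadd/gzero/gopp.
   The fibres are pairwise disjoint and cover Z by construction. *)
Record abgroupoid (Z L : finType) := AbGroupoid {
  gcls : Z -> L;
  gadd : Z -> Z -> Z;
  gzero : L -> Z;
  gopp : Z -> Z;
  gzero_cls : forall l, gcls (gzero l) = l;
  gadd_cls : forall x y, gcls x = gcls y -> gcls (gadd x y) = gcls x;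
  gopp_cls : forall x, gcls (gopp x) = gcls x;
  gaddA : forall x y z, gcls x = gcls y -> gcls y = gcls z ->
            gadd x (gadd y z) = gadd (gadd x y) z;
  gaddC : forall x y, gcls x = gcls y -> gadd x y = gadd y x;
  gadd0 : forall x, gadd (gzero (gcls x)) x = x;
  gaddN : forall x, gadd x (gopp x) = gzero (gcls x)
}.

Section Groupoid.
Variables (Z L : finType) (G : abgroupoid Z L).

Definition gsub (x y : Z) := gadd G x (gopp G y).

Definition gdelta : frel Z (Z * Z)%type :=
  fun g p => (gcls G p.1 == gcls G g) && (gcls G p.2 == gcls G g)
             && (gadd G p.1 p.2 == g).

Definition gpair : frel (Z * Z)%type unit :=
  fun p _ => (gcls G p.1 == gcls G p.2) && (gadd G p.1 p.2 == gzero G (gcls G p.1)).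

Definition gdec : cpm Z Z :=
  fun xx yy => [&& gcls G xx.2 == gcls G xx.1, gcls G yy.1 == gcls G xx.1,
                   gcls G yy.2 == gcls G xx.1 &
                   gsub xx.1 yy.1 == gsub xx.2 yy.2].

Definition grhodag (l : L) : cpm Z unit :=
  fun gg _ => (gcls G gg.1 == l) && (gcls G gg.2 == l).
End Groupoid.

Definition nondemolition (Z L : finType) (G : abgroupoid Z L) (X : finType)
  (M : cpm X (X * Z)%type) : Prop :=
  is_cpm M /\ causal M /\
  exists P : frel X (X * Z)%type,
    M = rcomp (ctensor (cid X) (gdec G)) (hatr P) /\
    (* idempotence *)
    rcomp (cassoc X Z Z) (rcomp (ctensor M (cid Z)) M)
      = rcomp (ctensor (cid X) (hatr (gdelta G))) M /\
    (* self-adjointness *)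
    rcomp (crunit X) (rcomp (ctensor (cid X) (hatr (gpair G)))
                         (rcomp (cassoc X Z Z) (ctensor M (cid Z))))
      = rcomp (hatr (rconv P)) (ctensor (cid X) (gdec G)).

Definition demolition (Z L : finType) (G : abgroupoid Z L) (X : finType)
  (Mb : cpm X Z) : Prop :=
  exists M : cpm X (X * Z)%type, nondemolition G M /\
    Mb = rcomp (clunit Z) (rcomp (ctensor (discard X) (cid Z)) M).

(* Main.v *)
Require Import Defs.
From HB Require Import structures.
From mathcomp Require Import all_boot.
Set Implicit Arguments. Unset Strict Implicit. Unset Printing Implicit Defensive.
From Stdlib Require Import FunctionalExtensionality.

Section Cyc.
Variables (X Gam : finType) (c : X -> Gam) (surj : forall g, exists x, c x == g).
Definition memb g := enum [pred y | c y == g].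
Definition nn g := size (memb g).
Definition ix x := index x (memb (c x)).
Definition EE g k (d : X) := nth d (memb g) (k %% nn g).
Definition repg g := xchoose (surj g).
Definition cadd x y := EE (c x) (ix x + ix y) x.
Definition czero g := EE g 0 (repg g).
Definition copp x := EE (c x) (nn (c x) - ix x) x.

Lemma mem_memb g y : (y \in memb g) = (c y == g).
Proof. by rewrite /memb mem_enum inE. Qed.

Lemma nn_gt0 g y : c y == g -> 0 < nn g.
Proof. rewrite -mem_memb /nn; by case: (memb g). Qed.

Lemma EE_cls g k d : 0 < nn g -> c (EE g k d) = g.
Proof. move=> h; apply/eqP; rewrite -mem_memb /EE mem_nth // ltn_pmod //. Qed.

Lemma ix_lt x : ix x < nn (c x).
Proof. by rewrite /ix /nn index_mem mem_memb. Qed.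

Lemma EE_ix g k d : 0 < nn g -> ix (EE g k d) = k %% nn g.
Proof.
move=> h; rewrite /ix EE_cls // /EE index_uniq ?ltn_pmod //.
exact: enum_uniq.
Qed.

Lemma EE_def g k k' d d' : 0 < nn g -> k %% nn g = k' %% nn g -> EE g k d = EE g k' d'.
Proof. move=> h e; rewrite /EE e; apply: set_nth_default; by rewrite ltn_pmod. Qed.

Lemma EE_self x d : EE (c x) (ix x) d = x.
Proof.
rewrite /EE modn_small ?ix_lt // (set_nth_default x) ?ix_lt //.
by rewrite nth_index // mem_memb.
Qed.

Lemma cpos x : 0 < nn (c x).
Proof. exact: (nn_gt0 (eqxx _)). Qed.

Definition cycG : abgroupoid X Gam.
Proof.
refine (@AbGroupoid X Gam c cadd czero copp _ _ _ _ _ _ _).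
- move=> l; apply: EE_cls; apply: (nn_gt0 (xchooseP (surj l))).
- move=> x y _; apply: EE_cls; apply: cpos.
- move=> x; apply: EE_cls; apply: cpos.
- move=> x y z hxy hyz; rewrite /cadd.
  have hy : c (EE (c y) (ix y + ix z) y) = c y by apply: EE_cls; apply: cpos.
  have hx : c (EE (c x) (ix x + ix y) x) = c x by apply: EE_cls; apply: cpos.
  rewrite hx; apply: EE_def; first exact: cpos.
  rewrite !EE_ix ?cpos // hxy modnDmr modnDml addnA //.
- move=> x y hxy; rewrite /cadd hxy; apply: EE_def; first exact: cpos.
  by rewrite addnC.
- move=> x; rewrite /cadd /czero.
  have h0 : c (EE (c x) 0 (repg (c x))) = c x by apply: EE_cls; apply: cpos.
  rewrite h0 EE_ix ?cpos // mod0n add0n; exact: EE_self.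
- move=> x; rewrite /cadd /copp /czero EE_ix ?cpos //; apply: EE_def; first exact: cpos.
  rewrite modnDmr subnKC ?modnn ?mod0n //; exact: ltnW (ix_lt x).
Defined.

Lemma cycG_cls : gcls cycG = c.
Proof. by []. Qed.
End Cyc.

Section Part.
Variables (X : finType) (e : rel X) (erefl : reflexive e) (esym : symmetric e)
  (etrans : transitive e).
Definition rep x := odflt x [pick y | e x y].
Lemma e_rep x : e x (rep x).
Proof. rewrite /rep; case: pickP => //= h; by have := h x; rewrite erefl. Qed.
Lemma rep_eq x y : e x y -> rep x = rep y.
Proof.
move=> h; rewrite /rep (@eq_pick _ (fun z => e x z) (fun z => e y z)).
  case: pickP => //= h'; by have := h' y; rewrite erefl.
move=> z /=; apply/idP/idP => hz.
- apply: etrans hz; by rewrite esym.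
- exact: etrans hz.
Qed.
Lemma rep_rep x : rep (rep x) == rep x.
Proof. by rewrite -(rep_eq (e_rep x)). Qed.
Definition PGam := {x : X | rep x == x}.
Definition pc (x : X) : PGam := exist _ (rep x) (rep_rep x).
Lemma pc_surj g : exists x, pc x == g.
Proof.
case: g => r hr; exists r; apply/eqP; apply: val_inj => /=; exact/eqP.
Qed.
Lemma pc_eq x y : (pc x == pc y) = e x y.
Proof.
apply/idP/idP.
- move/eqP/(congr1 val) => /= h.
  apply: etrans (e_rep x) _; rewrite h esym; exact: e_rep.
- move=> h; apply/eqP; apply: val_inj => /=; exact: rep_eq.
Qed.
Lemma pc_val x : e x (val (pc x)).
Proof. exact: e_rep. Qed.
End Part.
Section Main.
Variables (Z L : finType) (G : abgroupoid Z L) (X : finType) (P : Defs.frel X (X * Z)%type).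
Variable M : cpm X (X * Z)%type.
Hypothesis HM : M = rcomp (ctensor (cid X) (gdec G)) (hatr P).

Lemma Mchar x x' y y' z z' : M (x,x') ((y,z),(y',z')) =
  [exists w, exists w', [&& P x (y,w), P x' (y',w') & gdec G (w,w') (z,z')]].
Proof.
rewrite HM /rcomp; apply/existsP/existsP.
- case=> [[[a w] [a' w']]] /andP [/andP[h1 h2] /andP[/andP[e1 e2] hd]] /=.
  rewrite /rid /= in e1 e2; rewrite (eqP e1) in h1; rewrite (eqP e2) in h2.
  exists w; apply/existsP; exists w'; by rewrite h1 h2.
- case=> w /existsP [w' /and3P [h1 h2 hd]].
  exists ((y,w),(y',w')); by rewrite /hatr /ctensor /cid /hatr /rid /= h1 h2 hd !eqxx.
Qed.

Lemma gdec_refl w : gdec G (w,w) (w,w).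
Proof. by rewrite /gdec /= !eqxx. Qed.

Lemma gdec_cls w w' z z' : gdec G (w,w') (z,z') ->
  gcls G w' = gcls G w /\ gcls G z = gcls G w /\ gcls G z' = gcls G w.
Proof. by case/and4P => /= /eqP -> /eqP -> /eqP ->. Qed.

Lemma Mdiag x y w : P x (y,w) -> M (x,x) ((y,w),(y,w)).
Proof. move=> h; rewrite Mchar; apply/existsP; exists w; apply/existsP; exists w.
by rewrite h gdec_refl. Qed.

Hypothesis Hcaus : causal M.

Lemma tot x : exists y w, P x (y,w).
Proof.
have h : rcomp (discard _) M (x,x) (tt,tt) by rewrite Hcaus /discard eqxx.
case/existsP: h => [[[y z] [y' z']]] /andP[hm hd].
rewrite /discard /= in hd; case/eqP: hd => <- <- in hm.
rewrite Mchar in hm; case/existsP: hm => w /existsP [w' /and3P [h1 _ _]].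
by exists y, w.
Qed.

Lemma inj x x' y w : P x (y,w) -> P x' (y,w) -> x = x'.
Proof.
move=> h1 h2.
have h : rcomp (discard _) M (x,x') (tt,tt).
  apply/existsP; exists ((y,w),(y,w)); rewrite /discard eqxx andbT Mchar.
  apply/existsP; exists w; apply/existsP; exists w; by rewrite h1 h2 gdec_refl.
by move: h; rewrite Hcaus /discard => /eqP.
Qed.

Hypothesis Hsa : rcomp (crunit X) (rcomp (ctensor (cid X) (hatr (gpair G)))
                         (rcomp (cassoc X Z Z) (ctensor M (cid Z))))
      = rcomp (hatr (rconv P)) (ctensor (cid X) (gdec G)).

Lemma sa x y w : P x (y,w) -> exists u, (gcls G u == gcls G w) && P y (x,u).
Proof.
move=> h.
have E := f_equal (fun F => F ((x,w),(x,w)) (y,y)) Hsa; simpl in E.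
have : true = rcomp (hatr (rconv P)) (ctensor (cid X) (gdec G)) ((x,w),(x,w)) (y,y).
  rewrite -E; symmetry.
  apply/existsP; exists ((y,tt),(y,tt)); apply/andP; split; last first.
    by rewrite /crunit /hatr /= eqxx.
  apply/existsP; exists ((y,(gopp G w, w)),(y,(gopp G w,w))); apply/andP; split; last first.
    rewrite /ctensor /cid /hatr /rid /gpair /= eqxx /= gopp_cls eqxx /=.
    by rewrite gaddC ?gopp_cls // gaddN eqxx.
  apply/existsP; exists (((y,gopp G w),w),((y,gopp G w),w)); apply/andP; split; last first.
    by rewrite /cassoc /hatr /= eqxx.
  rewrite /ctensor /cid /hatr /rid /= !eqxx andbT Mchar.
  rewrite andbT; apply/existsP; exists w; apply/existsP; exists w; rewrite h /gdec /= gopp_cls !eqxx //.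
move/esym; rewrite /rcomp => /existsP [[[a z1] [a' z1']]] /andP [hc hp].
rewrite /ctensor /cid /hatr /rid /= in hc hp.
case/andP: hc => /andP [/eqP ea _] hd; rewrite -ea /rconv in hp.
case: (gdec_cls hd) => _ [hz _].
exists z1; rewrite hz eqxx /=; by case/andP: hp.
Qed.

Hypothesis Hid : rcomp (cassoc X Z Z) (rcomp (ctensor M (cid Z)) M)
      = rcomp (ctensor (cid X) (hatr (gdelta G))) M.

Lemma idm x y w y2 w2 : P x (y,w) -> P y (y2,w2) ->
  gcls G w2 = gcls G w /\ exists u, P x (y2,u).
Proof.
move=> h1 h2.
have E := f_equal (fun F => F (x,x) ((y2,(w2,w)),(y2,(w2,w)))) Hid; simpl in E.
have : true = rcomp (ctensor (cid X) (hatr (gdelta G))) M (x,x) ((y2,(w2,w)),(y2,(w2,w))).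
  rewrite -E; symmetry.
  apply/existsP; exists (((y2,w2),w),((y2,w2),w)); apply/andP; split; last first.
    by rewrite /cassoc /hatr /= eqxx.
  apply/existsP; exists ((y,w),(y,w)); rewrite Mdiag //=.
  by rewrite /ctensor /cid /hatr /rid /= !eqxx andbT Mdiag.
move/esym; rewrite /rcomp => /existsP [[[a s] [a' s']]] /andP [hm hc].
rewrite /ctensor /cid /hatr /rid /gdelta /= in hc.
case/and3P: hc => /andP[/eqP ea _] /andP[/andP[/eqP c1 /eqP c2] _] _.
rewrite ea Mchar in hm; case/existsP: hm => u /existsP [u' /and3P [hu _ _]].
split; first by rewrite c1 c2.
by exists u.
Qed.
End Main.

Lemma rho_dec (X' Gam : finType) (H : abgroupoid X' Gam) g x x' u :
  rcomp (grhodag H g) (gdec H) (x,x') u = (gcls H x == g) && (gcls H x' == g).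
Proof.
apply/existsP/andP.
- case=> [[y y']] /andP [/and4P [/= /eqP h1 /eqP h2 _ _] /andP [/= /eqP h3 _]].
  by rewrite h1 -h2 h3 eqxx.
- case=> /eqP h1 /eqP h2; exists (x,x'); rewrite /gdec /grhodag /= h1 h2 !eqxx /=.
  by rewrite andbT /gsub !gaddN h1 h2.
Qed.

Theorem mainTheorem5 (Z L : finType) (G : abgroupoid Z L) (X : finType)
  (Mb : cpm X Z) :
  demolition G Mb ->
  exists (Gam : finType) (H : abgroupoid X Gam) (f : Gam -> L),
    forall l : L,
      rcomp (grhodag G l) Mb
      = (fun xx u => [exists g : Gam,
                        (f g == l) && rcomp (grhodag H g) (gdec H) xx u]).
Proof.
case=> M [[_ [Hc [P [HM [Hid Hsa]]]]] HMb].
pose Rel := fun x y => [exists w, P x (y,w)].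
have Rsym : symmetric Rel.
  suff h : forall x y, Rel x y -> Rel y x by move=> x y; apply/idP/idP; apply: h.
  move=> x y /existsP [w hw]; case: (sa HM Hsa hw) => u /andP [_ hu].
  by apply/existsP; exists u.
have Rtrans : transitive Rel.
  move=> y x z /existsP [w hw] /existsP [w2 hw2].
  case: (idm HM Hid hw hw2) => _ [u hu]; by apply/existsP; exists u.
have tot' : forall x, exists p, P x p.
  move=> x; case: (tot HM Hc x) => y [w h]; by exists (y,w).
have Rrefl : reflexive Rel.
  move=> x; case: (tot' x) => [[y w] h].
  have h1 : Rel x y by apply/existsP; exists w.
  have h2 : Rel y x by rewrite Rsym.
  exact: Rtrans h1 h2.
pose lab x := gcls G (xchoose (tot' x)).2.
have lab_spec : forall x y w, P x (y,w) -> gcls G w = lab x.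
  move=> x y w h; case: (sa HM Hsa h) => u /andP [/eqP hu hu'].
  have hp := xchooseP (tot' x).
  rewrite /lab; case: (xchoose (tot' x)) hp => [a b] hp.
  case: (idm HM Hid hu' hp) => hb _; by rewrite /= hb hu.
have lab_rel : forall x x', Rel x x' -> lab x = lab x'.
  move=> x x' /existsP [w0 h0].
  have hp := xchooseP (tot' x').
  rewrite /lab; case: (xchoose (tot' x')) hp => [a b] hp /=.
  case: (idm HM Hid h0 hp) => hb _; rewrite hb; apply: esym; exact: lab_spec h0.
pose Gam := PGam Rel.
pose H := cycG (pc_surj Rrefl Rsym Rtrans).
exists Gam, H, (fun g => lab (val g)) => l.
have Hcls : forall x, gcls H x = pc Rrefl Rsym Rtrans x by [].
apply: functional_extensionality => -[x x']; apply: functional_extensionality => u.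
have Mbchar : forall z z', Mb (x,x') (z,z') = [exists y, M (x,x') ((y,z),(y,z'))].
  move=> z z'; rewrite HMb /rcomp; apply/existsP/existsP.
  - case=> [[[t1 s1] [t2 s2]]] /andP [/existsP [[[y1 z1] [y2 z2]]] /andP [hm hct] hcl].
    rewrite /ctensor /discard /cid /hatr /rid /= in hct.
    rewrite /clunit /hatr /= in hcl.
    case/and3P: hct => /eqP e1 /eqP e2 /eqP e3.
    case/andP: hcl => /eqP e4 /eqP e5.
    exists y1; by rewrite -e1 e2 e3 e4 e5 in hm.
  - case=> y hm; exists ((tt,z),(tt,z')); rewrite /clunit /hatr /= !eqxx andbT.
    rewrite andbT; apply/existsP; exists ((y,z),(y,z')); rewrite hm /ctensor /discard /cid /hatr /rid /=.
    by rewrite !eqxx.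
apply/idP/idP.
- case/existsP => [[z z']] /andP [hmb /andP [/= /eqP hz /eqP hz']].
  rewrite Mbchar in hmb; case/existsP: hmb => y hm.
  rewrite (Mchar HM) in hm; case/existsP: hm => w /existsP [w' /and3P [h1 h2 hd]].
  case: (gdec_cls hd) => _ [hzw _].
  have r1 : Rel x y by apply/existsP; exists w.
  have r2 : Rel x' y by apply/existsP; exists w'.
  have rxx : Rel x x' by apply: (Rtrans y x x' r1); rewrite Rsym.
  apply/existsP; exists (pc Rrefl Rsym Rtrans x); rewrite rho_dec !Hcls eqxx /=.
  rewrite pc_eq Rsym rxx andbT.
  have hr : Rel x (rep Rel x) := pc_val Rrefl Rsym Rtrans x.
  by rewrite -(lab_rel _ _ hr) -(lab_spec _ _ _ h1) -hzw hz.
- case/existsP => g /andP [/eqP hf]; rewrite rho_dec !Hcls => /andP [/eqP e1 /eqP e2].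
  have rxx : Rel x x' by rewrite -pc_eq // e1 e2.
  have hl : lab x = l.
    by rewrite -hf -e1 -(lab_rel _ _ (pc_val Rrefl Rsym Rtrans x)).
  case: (tot HM Hc x') => y [w' h2].
  have r2 : Rel x' y by apply/existsP; exists w'.
  have /existsP [w h1] : Rel x y by exact: (Rtrans x' x y rxx r2).
  have c1 : gcls G w = l by rewrite (lab_spec _ _ _ h1).
  have c2 : gcls G w' = l by rewrite (lab_spec _ _ _ h2) -(lab_rel _ _ rxx).
  apply/existsP; exists (w,w'); rewrite /grhodag /= c1 c2 eqxx andbT Mbchar.
  rewrite andbT; apply/existsP; exists y; rewrite (Mchar HM); apply/existsP; exists w; apply/existsP; exists w'.
  rewrite h1 h2 /gdec /= c1 c2 eqxx /= /gsub !gaddN c1 c2 eqxx //.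
Qed.
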